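(* For any positive integers $f,l$ and any choice of integers $(M_C)_C$ for which the hypercube Hamiltonian $H=\sum_C\bigl(\sum_{i\in C}S_i-M_C\bigr)^2$ has at least one zero energy assignment, any two distinct zero energy assignments differ in at least $2^f$ variables; consequently every global minimum of $H$ is a $(2^f-1)$-minimum.
   Context: Fix positive integers $f,l$ and let $N=l^f$. The variables $S_i\in\{-1,+1\}$ are indexed by vectors $i=(x_1,\dots,x_f)$ with $x_a\in\{1,\dots,l\}$. A column $C$ is specified by an index $b\in\{1,\dots,f\}$ and integers $y_a\in\{1,\dots,l\}$ for all $a\neq b$; a variable $(x_1,\dots,x_f)$ lies in $C$ iff $x_a=y_a$ for all $a\neq b$. Given an integer $M_C$ for each column, $H(S)=\sum_C\bigl(\sum_{i\in C}S_i-M_C\bigr)^2$. A zero energy assignment is an $S$ with $\sum_{i\in C}S_i=M_C$ for every column $C$. A global minimum is an assignment minimizing $H$. For an integer $k\geq1$, an assignment $A$ is a $k$-minimum of $H$ if every assignment differing from $A$ in at least one and at most $k$ variables has a strictly larger value of $H$ than $A$. *)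

(* Defs.v *)
From HB Require Import structures.
From mathcomp Require Import all_boot all_order all_algebra.
Set Implicit Arguments. Unset Strict Implicit. Unset Printing Implicit Defensive.
Import Order.TTheory GRing.Theory Num.Theory.
Local Open Scope ring_scope.

(* Variables are indexed by vectors (x_1,...,x_f) with x_a in {1..l},
   encoded as finite functions 'I_f -> 'I_l (0-based). *)
Definition vindex (f l : nat) := {ffun 'I_f -> 'I_l}.

(* A column: a direction b and values y_a for all a <> b. *)
Definition column (f l : nat) :=
  {b : 'I_f & {ffun {a : 'I_f | a != b} -> 'I_l}}.

Definition in_col (f l : nat) (C : column f l) (x : vindex f l) : bool :=
  [forall a : {a : 'I_f | a != tag C}, x (val a) == tagged C a].

(* An assignment S_i in {-1,+1}, encoded as a boolean (true <-> +1). *)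
Definition assignment (f l : nat) := {ffun vindex f l -> bool}.

Definition spin (b : bool) : int := if b then 1 else -1.

Definition colsum (f l : nat) (S : assignment f l) (C : column f l) : int :=
  \sum_(x : vindex f l | in_col C x) spin (S x).

Definition H (f l : nat) (M : column f l -> int) (S : assignment f l) : int :=
  \sum_(C : column f l) (colsum S C - M C) ^+ 2.

Definition zero_energy (f l : nat) (M : column f l -> int) (S : assignment f l) : Prop :=
  forall C : column f l, colsum S C = M C.

Definition global_min (f l : nat) (M : column f l -> int) (A : assignment f l) : Prop :=
  forall T : assignment f l, H M A <= H M T.

Definition hdist (f l : nat) (S T : assignment f l) : nat :=
  #|[set x : vindex f l | S x != T x]|.

Definition k_minimum (f l : nat) (M : column f l -> int) (k : nat) (A : assignment f l) : Prop :=
  forall T : assignment f l, (0 < hdist A T <= k)%N -> H M A < H M T.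

(* Main.v *)
Require Import Defs.
From HB Require Import structures.
From mathcomp Require Import all_boot all_order all_algebra.
Import Order.TTheory GRing.Theory Num.Theory.
Local Open Scope ring_scope.

Section Cube.
Variables (f l : nat) (D : vindex f l -> int).
Hypothesis hD : forall (y0 : vindex f l) (b : 'I_f), D y0 != 0 ->
  exists y1 : vindex f l, (forall a, a != b -> y1 a = y0 a) /\ y1 b != y0 b /\ D y1 != 0.

Definition Psub (F : {set 'I_f}) (x : vindex f l) : {set vindex f l} :=
  [set y : vindex f l | [forall a, (a \notin F) ==> (y a == x a)] && (D y != 0)].

Lemma Psub_card (n : nat) : forall (F : {set 'I_f}) (x : vindex f l), #|F| = n ->
  (exists y, y \in Psub F x) -> (2 ^ n <= #|Psub F x|)%N.
Proof.
elim: n => [|n IH] F x HF Hne.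
  by rewrite expn0; apply/card_gt0P.
have [b Fb] : exists b, b \in F by apply/card_gt0P; rewrite HF.
have HF' : #|F :\ b| = n by move: HF; rewrite (cardsD1 b) Fb => -[].
case: Hne => y0; rewrite inE => /andP [/forallP Hy0x Dy0].
have [y1 [Hy1a [Hy1b Dy1]]] := hD y0 b Dy0.
have in0 : y0 \in Psub (F :\ b) y0.
  by rewrite inE Dy0 andbT; apply/forallP => a; apply/implyP.
have in1 : y1 \in Psub (F :\ b) y1.
  by rewrite inE Dy1 andbT; apply/forallP => a; apply/implyP.
have sub0 : Psub (F :\ b) y0 \subset Psub F x.
  apply/subsetP => y; rewrite !inE => /andP [/forallP Hy ->]; rewrite andbT.
  apply/forallP => a; apply/implyP => aF.
  have := Hy a; rewrite !inE negb_and aF orbT /= => /eqP ->.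
  by have := Hy0x a; rewrite aF.
have sub1 : Psub (F :\ b) y1 \subset Psub F x.
  apply/subsetP => y; rewrite !inE => /andP [/forallP Hy ->]; rewrite andbT.
  apply/forallP => a; apply/implyP => aF.
  have := Hy a; rewrite !inE negb_and aF orbT /= => /eqP ->.
  have ab : a != b by apply: contraNneq aF => ->.
  rewrite Hy1a //.
  by have := Hy0x a; rewrite aF.
have disj : Psub (F :\ b) y0 :&: Psub (F :\ b) y1 = set0.
  apply/setP => y; rewrite !inE.
  apply/negP => /andP [/andP [/forallP H0 _] /andP [/forallP H1 _]].
  have := H0 b; have := H1 b; rewrite !inE eqxx /= => /eqP e1 /eqP e0.
  by move/eqP: Hy1b; apply; rewrite -e1 -e0.
have := cardsUI (Psub (F :\ b) y0) (Psub (F :\ b) y1).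
rewrite disj cards0 addn0 => HU.
apply: (@leq_trans #|Psub (F :\ b) y0 :|: Psub (F :\ b) y1|).
  rewrite HU expnS mul2n -addnn leq_add //.
    by apply: IH => //; exists y0.
  by apply: IH => //; exists y1.
by apply: subset_leq_card; rewrite subUset sub0 sub1.
Qed.
End Cube.

Lemma H_ge0 f l (M : column f l -> int) S : 0 <= H M S.
Proof. by apply: sumr_ge0 => C _; apply: sqr_ge0. Qed.

Lemma H_zero f l (M : column f l -> int) S : zero_energy M S -> H M S = 0.
Proof. by move=> HS; apply: big1 => C _; rewrite HS subrr expr0n. Qed.

Lemma zero_H f l (M : column f l -> int) S : H M S = 0 -> zero_energy M S.
Proof.
move=> H0 C; rewrite /H in H0.
have := @psumr_eq0P _ _ xpredT (fun C => (colsum S C - M C) ^+ 2) (fun C _ => sqr_ge0 _) H0 C isT.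
by move/eqP; rewrite sqrf_eq0 subr_eq0 => /eqP.
Qed.

Lemma part1 f l (M : column f l -> int) (S T : assignment f l) :
  zero_energy M S -> zero_energy M T -> S != T -> (2 ^ f <= hdist S T)%N.
Proof.
move=> HS HT ST.
pose D := fun y => spin (S y) - spin (T y).
have DE : forall y, (D y != 0) = (S y != T y).
  by move=> y; rewrite /D; case: (S y); case: (T y).
have hD : forall (y0 : vindex f l) (b : 'I_f), D y0 != 0 ->
  exists y1 : vindex f l, (forall a, a != b -> y1 a = y0 a) /\ y1 b != y0 b /\ D y1 != 0.
  move=> y0 b Dy0.
  pose C : column f l := existT _ b [ffun a : {a : 'I_f | a != b} => y0 (val a)].
  have inC : forall y, in_col C y = [forall a : {a : 'I_f | a != b}, y (val a) == y0 (val a)].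
    by move=> y; rewrite /in_col /=; apply: eq_forallb => a; rewrite ffunE.
  have sum0 : \sum_(y | in_col C y) D y = 0.
    by rewrite /D sumrB -/(colsum S C) -/(colsum T C) HS HT subrr.
  case: (boolP [exists y, [&& in_col C y, y != y0 & D y != 0]]).
    move/existsP => [y1 /and3P [Cy1 ne Dy1]]; exists y1.
    have agree : forall a, a != b -> y1 a = y0 a.
      move=> a ab; move: Cy1; rewrite inC => /forallP /(_ (exist _ a ab)) /eqP.
      by [].
    split => //; split => //.
    apply: contra ne => /eqP e; apply/eqP/ffunP => a.
    by case: (eqVneq a b) => [-> //|]; apply: agree.
  move/existsPn => Hn; exfalso.
  have Cy0 : in_col C y0 by rewrite inC; apply/forallP.
  move: sum0; rewrite (bigD1 y0) //= big1 ?addr0; first by move/eqP; rewrite (negbTE Dy0).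
  move=> y /andP [Cy ne]; have := Hn y; rewrite Cy ne /=.
  by move/negPn/eqP.
have [y Hy] : exists y, S y != T y.
  case: (boolP [exists y, S y != T y]) => [/existsP // | /existsPn Hn].
  exfalso; move/negP: ST; apply; apply/eqP/ffunP => y; apply/eqP; exact/negPn/Hn.
have := @Psub_card f l D hD f [set: 'I_f] y; rewrite cardsT card_ord => /(_ erefl).
have eqP' : @Psub f l D [set: 'I_f] y = [set x | S x != T x].
  apply/setP => x; rewrite !inE DE andb_idl // => _; by apply/forallP => a; rewrite inE.
rewrite eqP' /hdist; apply; exists y; by rewrite inE.
Qed.

Theorem mainTheorem4 (f l : nat) (hf : (0 < f)%N) (hl : (0 < l)%N)
    (M : column f l -> int)
    (hz : exists S : assignment f l, zero_energy M S) :
  (forall S T : assignment f l, zero_energy M S -> zero_energy M T -> S != T ->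
     (2 ^ f <= hdist S T)%N) /\
  (forall A : assignment f l, global_min M A -> k_minimum M (2 ^ f - 1) A).
Proof.
split; first exact: part1.
move=> A HA T /andP [Hpos Hle].
case: hz => S HS.
have HA0 : H M A = 0 by apply/le_anti; rewrite H_ge0 andbT -(@H_zero f l M S HS); exact: HA.
rewrite HA0 lt_def H_ge0 andbT eq_sym; apply/negP => /eqP HT0.
have AT : A != T.
  by apply: contraTneq Hpos => ->; rewrite /hdist (_ : [set x | _] = set0) ?cards0 //; apply/setP => x; rewrite !inE eqxx.
have := @part1 f l M A T (@zero_H f l M A HA0) (@zero_H f l M T (esym HT0)) AT.
move=> H2; have := leq_trans H2 Hle.
have : (0 < 2 ^ f)%N by rewrite expn_gt0.
move: (2 ^ f)%N => m; case: m => // m _; by rewrite subSS subn0 ltnn.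
Qed.
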